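(* Let $G$ be a graph without isolated vertices. (i) If $f=(V_0,V_1,V_2)$ is any $\gamma_R(G)$-function, then $\gamma_{qtR}(G)\le \gamma_R(G)+|V_2|$. (ii) If $f'=(V'_0,V'_1,V'_2)$ is any $\gamma_{qtR}(G)$-function, then $\gamma_{tR}(G)\le \gamma_{qtR}(G)+|V'_1|$.
   Context: All graphs are finite, simple and undirected. For a function $f:V(G)\to\{0,1,2\}$ write $V_i=\{v: f(v)=i\}$ and identify $f$ with $(V_0,V_1,V_2)$; its weight is $\omega(f)=\sum_{v}f(v)=|V_1|+2|V_2|$. A Roman dominating function (RDF) is such an $f$ in which every vertex with label $0$ has a neighbor with label $2$; $\gamma_R(G)$ is the minimum weight of an RDF. A total Roman dominating function (TRDF) on a graph without isolated vertices is an RDF such that the subgraph induced by $V_1\cup V_2$ has no isolated vertices; $\gamma_{tR}(G)$ is the minimum weight of a TRDF. A quasi-total Roman dominating function (QTRDF) is an $f:V(G)\to\{0,1,2\}$ such that every vertex with label $0$ is adjacent to a vertex with label $2$, and every vertex that is isolated in the subgraph induced by $V_1\cup V_2$ has label $1$; $\gamma_{qtR}(G)$ is the minimum weight of a QTRDF. A $\gamma_R(G)$-function (resp. $\gamma_{qtR}(G)$-function) is an RDF (resp. QTRDF) of minimum weight. *)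

(* Defs.v *)
From mathcomp Require Import all_boot.
Set Implicit Arguments. Unset Strict Implicit. Unset Printing Implicit Defensive.

Definition simple_graph (T : finType) (e : rel T) : Prop :=
  symmetric e /\ irreflexive e.

Definition no_isolated (T : finType) (e : rel T) : Prop :=
  forall v : T, exists u : T, e v u.

Definition lab (T : finType) := {ffun T -> 'I_3}.

Definition Vi (T : finType) (f : lab T) (i : nat) : {set T} :=
  [set v | nat_of_ord (f v) == i].

Definition weight (T : finType) (f : lab T) : nat := \sum_(v : T) nat_of_ord (f v).

Definition is_RDF (T : finType) (e : rel T) (f : lab T) : bool :=
  [forall v, (nat_of_ord (f v) == 0) ==> [exists u, e v u && (nat_of_ord (f u) == 2)]].

Definition isolated_in_pos (T : finType) (e : rel T) (f : lab T) (v : T) : bool :=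
  (0 < f v) && ~~ [exists u, e v u && (0 < f u)].

Definition is_TRDF (T : finType) (e : rel T) (f : lab T) : bool :=
  is_RDF e f && [forall v, ~~ isolated_in_pos e f v].

Definition is_QTRDF (T : finType) (e : rel T) (f : lab T) : bool :=
  is_RDF e f && [forall v, isolated_in_pos e f v ==> (nat_of_ord (f v) == 1)].

(* minimum weight over all labelings satisfying P; 2|T| is an upper bound
   attained by the constant-2 labeling, which satisfies all three notions
   when G has no isolated vertices *)
Definition min_weight (T : finType) (P : pred (lab T)) : nat :=
  \big[minn/(2 * #|T|)]_(f : lab T | P f) weight f.

Definition gammaR (T : finType) (e : rel T) : nat := min_weight (is_RDF e).
Definition gammatR (T : finType) (e : rel T) : nat := min_weight (is_TRDF e).
Definition gammaqtR (T : finType) (e : rel T) : nat := min_weight (is_QTRDF e).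

(* Main.v *)
Require Import Defs.
From mathcomp Require Import all_boot.
Set Implicit Arguments. Unset Strict Implicit. Unset Printing Implicit Defensive.

Lemma minw_le (T : finType) (P : pred (lab T)) g : P g -> min_weight P <= weight g.
Proof.
move=> Pg; rewrite /min_weight.
have : g \in index_enum (lab T) by rewrite mem_index_enum.
elim: (index_enum _) => [|a r IH] //=; rewrite big_cons inE.
case/orP=> [/eqP <-|gr]; first by rewrite Pg geq_minl.
case: (P a); last exact: IH.
by rewrite geq_min IH ?orbT.
Qed.

Definition bump (T : finType) (f : lab T) (S : {set T}) : lab T :=
  [ffun u => if (u \in S) && (nat_of_ord (f u) == 0) then inord 1 else f u].

Lemma bump_weight (T : finType) (f : lab T) (S : {set T}) : weight (bump f S) <= weight f + #|S|.
Proof.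
rewrite /weight -sum1_card [X in _ + X]big_mkcond /= -big_split /=.
apply: leq_sum => u _; rewrite ffunE.
case: ifP => [/andP[-> /eqP ->]|_]; first by rewrite inordK.
by rewrite leq_addr.
Qed.

Lemma bump_pos (T : finType) (f : lab T) (S : {set T}) (u : T) : 0 < f u -> bump f S u = f u.
Proof. by move=> H; rewrite ffunE; case: eqP H => [->|] //; rewrite andbF. Qed.

Lemma bump_ge (T : finType) (f : lab T) (S : {set T}) (u : T) : u \in S -> 0 < bump f S u.
Proof. by move=> H; rewrite ffunE H /=; case: eqP => [_|]; [rewrite inordK | case: (f u) => -[]]. Qed.

Lemma bump_zero (T : finType) (f : lab T) (S : {set T}) (u : T) : nat_of_ord (bump f S u) = 0 -> nat_of_ord (f u) = 0.
Proof. by rewrite ffunE; case: ifP => // _; rewrite inordK. Qed.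

Lemma bump_RDF (T : finType) (e : rel T) (f : lab T) (S : {set T}) : is_RDF e f -> is_RDF e (bump f S).
Proof.
move=> /forallP H; apply/forallP => v; apply/implyP => /eqP /bump_zero /eqP H0.
have /existsP[u /andP[evu fu]] := implyP (H v) H0.
apply/existsP; exists u; rewrite evu /= bump_pos //; by rewrite (eqP fu).
Qed.

Definition nb (T : finType) (e : rel T) (v : T) : T := odflt v [pick u | e v u].

Lemma nbP (T : finType) (e : rel T) v : no_isolated e -> e v (nb e v).
Proof.
move=> NI; rewrite /nb; case: pickP => [u Hu //|H].
by have [u Hu] := NI v; rewrite H in Hu.
Qed.

Theorem mainTheorem1 (T : finType) (e : rel T) :
  simple_graph e -> no_isolated e ->
  (forall f : lab T, is_RDF e f -> weight f = gammaR e ->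
     gammaqtR e <= gammaR e + #|Vi f 2|) /\
  (forall f' : lab T, is_QTRDF e f' -> weight f' = gammaqtR e ->
     gammatR e <= gammaqtR e + #|Vi f' 1|).
Proof.
move=> [sym _] NI; split.
- move=> f Rf <-.
  set S := [set nb e v | v in Vi f 2].
  suff Q : is_QTRDF e (bump f S).
    apply: leq_trans (minw_le Q) _; apply: leq_trans (bump_weight f S) _.
    by rewrite leq_add2l leq_imset_card.
  rewrite /is_QTRDF bump_RDF //=.
  apply/forallP => v; apply/implyP => /andP[pv /existsP nex].
  have := pv; rewrite ffunE; case: ifP => [_|_ p2]; first by rewrite inordK.
  case E: (nat_of_ord (f v)) (ltn_ord (f v)) p2 => [|[|[|]]] //= _ _.
  exfalso; apply: nex; exists (nb e v); rewrite nbP //= bump_ge //.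
  by apply: imset_f; rewrite inE E.
- move=> f Qf <-.
  set S := [set nb e v | v in Vi f 1].
  suff Q : is_TRDF e (bump f S).
    apply: leq_trans (minw_le Q) _; apply: leq_trans (bump_weight f S) _.
    by rewrite leq_add2l leq_imset_card.
  rewrite /is_TRDF bump_RDF /=; last by case/andP: Qf.
  move: Qf => /andP[_ /forallP Qf].
  apply/forallP => v; apply/negP => /andP[pv /existsP nex].
  case E: (nat_of_ord (f v)) (ltn_ord (f v)) => [|[|[|]]] //= _.
  + move: pv; rewrite ffunE E andbT; case: ifP => [/imsetP[w wV Hv] _|]; last by rewrite E.
    apply: nex; exists w; rewrite Hv sym nbP //= bump_pos; rewrite inE in wV; by rewrite (eqP wV).
  + apply: nex; exists (nb e v); rewrite nbP //= bump_ge //.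
    by apply: imset_f; rewrite inE E.
  + have := implyP (Qf v); rewrite E /= => H.
    have NI2 : ~~ isolated_in_pos e f v by apply/negP => /H.
    move: NI2.
    rewrite /isolated_in_pos E /= negbK => /existsP[u /andP[evu pu]].
    by apply: nex; exists u; rewrite evu bump_pos.
Qed.
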